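(* Let $(\Omega,\Sigma,\mu)$ be a finite measure space and let $X(\mu)$ be a strictly rectangular function space. For every $f\in L^0(\mu)$, the norm of $X(\mu)$ is strictly monotone on $S(f,X(\mu))$ (i.e. $\|g\|\le\|h\|$ whenever $g,h\in S(f,X(\mu))$ and $0\le g\le h$), and $$\||g|-|h|\|\le 4\|g-h\|\quad\text{for all } g,h\in S(f,X(\mu)).$$ If moreover $f\in X(\mu)$, then for all $s\in S(\Sigma)$ and $g\in S(f,X(\mu))$, $$\||sg|\|\le\|s\|_\infty\||g|\|,\qquad \|sg\|\le 4\|s\|_\infty\|g\|.$$
   Context: $L^0(\mu)$ is the space of equivalence classes (modulo $\mu$-a.e. equality) of real $\Sigma$-measurable functions, ordered $\mu$-a.e. A strictly rectangular function space is a vector subspace $X(\mu)\subseteq L^0(\mu)$ with a norm such that $\chi_Ah\in X(\mu)$ and $\|\chi_Ah\|\le\|h\|$ for all $h\in X(\mu)$, $A\in\Sigma$. $S(\Sigma)$ is the space of real $\Sigma$-simple functions, $\|\cdot\|_\infty$ the $L^\infty(\mu)$ norm. For $f\in L^0(\mu)$: $\Sigma_f=\{A\in\Sigma: f\chi_A\in X(\mu)\}$, $S(f,X(\mu))=\operatorname{span}\{f\chi_A:A\in\Sigma_f\}$. *)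

(* Defs.v *)
From HB Require Import structures.
From mathcomp Require Import all_boot all_order all_algebra.
From mathcomp Require Import all_classical all_reals all_analysis.
From mathcomp Require Import ess_sup_inf.
Set Implicit Arguments. Unset Strict Implicit. Unset Printing Implicit Defensive.
Import Order.TTheory GRing.Theory Num.Theory.
Import numFieldNormedType.Exports.
Local Open Scope classical_set_scope.
Local Open Scope ring_scope.

(* Elements of L^0(mu) are represented by measurable functions T -> R;
   equality/order are taken mu-a.e. *)

Section defs.
Context (d : measure_display) (T : measurableType d) (R : realType).
Variable mu : {measure set T -> \bar R}.

Definition L0 (g : T -> R) : Prop := measurable_fun setT g.

Definition ae_eq (g h : T -> R) : Prop := {ae mu, forall x, g x = h x}.
Definition ae_le (g h : T -> R) : Prop := {ae mu, forall x, g x <= h x}.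

(* X : the set of (representatives of) elements of X(mu); N : its norm,
   evaluated on representatives. *)
Record strictly_rectangular_space (X : set (T -> R)) (N : (T -> R) -> R)
  : Prop := {
  srs_L0 : forall g, X g -> L0 g;
  srs_ae : forall g h, X g -> L0 h -> ae_eq g h -> X h /\ N h = N g;
  srs_0 : X (fun _ => 0);
  srs_add : forall g h, X g -> X h -> X (fun x => g x + h x);
  srs_scale : forall (c : R) g, X g -> X (fun x => c * g x);
  srs_norm0 : forall g, X g -> (N g = 0 <-> ae_eq g (fun _ => 0));
  srs_triangle : forall g h, X g -> X h -> N (fun x => g x + h x) <= N g + N h;
  srs_homog : forall (c : R) g, X g -> N (fun x => c * g x) = `|c| * N g;
  srs_rect : forall (A : set T) g, measurable A -> X g ->
    X (fun x => \1_A x * g x) /\ N (fun x => \1_A x * g x) <= N g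
}.

Definition Sigma_f (X : set (T -> R)) (f : T -> R) (A : set T) : Prop :=
  measurable A /\ X (fun x => f x * \1_A x).

Definition S_fX (X : set (T -> R)) (f : T -> R) (g : T -> R) : Prop :=
  L0 g /\
  exists (n : nat) (c : 'I_n -> R) (A : 'I_n -> set T),
    (forall i, Sigma_f X f (A i)) /\
    ae_eq g (fun x => \sum_(i < n) c i * (f x * \1_(A i) x)).

Definition simple_fun (s : T -> R) : Prop :=
  exists (n : nat) (c : 'I_n -> R) (A : 'I_n -> set T),
    (forall i, measurable (A i)) /\
    s = (fun x => \sum_(i < n) c i * \1_(A i) x).

Definition Linf_norm (s : T -> R) : R := fine (ess_sup mu (fun x => (`|s x|)%:E)).

End defs.

(* Main.v *)
Require Import Defs.
From HB Require Import structures.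
From mathcomp Require Import all_boot all_order all_algebra.
From mathcomp Require Import all_classical all_reals all_analysis.
From mathcomp Require Import ess_sup_inf.
From mathcomp Require Import ring lra.
Import Order.TTheory GRing.Theory Num.Theory.
Local Open Scope classical_set_scope.
Local Open Scope ring_scope.

Section fib.
Context {d : measure_display} {T : measurableType d} {R : realType}.

Definition mfib {K : finType} (G : T -> K) := forall k, measurable [set x | G x = k].

Lemma mfib_pred {K : finType} (G : T -> K) : mfib G ->
  forall P : K -> Prop, measurable [set x | P (G x)].
Proof.
move=> hG P.
have -> : [set x | P (G x)] = \bigcup_(k in [set k | P k]) [set x | G x = k].
  apply/seteqP; split => x /=.
    by move=> Px; exists (G x).
  by case=> k /= Pk Gk; rewrite Gk.
apply: fin_bigcup_measurable; first exact: finite_finset.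
by move=> k _; exact: hG.
Qed.

Lemma mfib_mfun {K : finType} (G : T -> K) (F : K -> R) : mfib G ->
  measurable_fun setT (fun x => F (G x)).
Proof.
move=> hG _ B mB; rewrite setTI.
exact: (mfib_pred _ hG (fun k => B (F k))).
Qed.

Lemma mfib_pair {K1 K2 : finType} (G1 : T -> K1) (G2 : T -> K2) :
  mfib G1 -> mfib G2 -> mfib (fun x => (G1 x, G2 x)).
Proof.
move=> h1 h2 [k1 k2].
have -> : [set x | (G1 x, G2 x) = (k1, k2)] =
   [set x | G1 x = k1] `&` [set x | G2 x = k2].
  apply/seteqP; split => x /=; first by case=> -> ->.
  by case=> -> ->.
exact: measurableI.
Qed.

Definition code {n} (A : 'I_n -> set T) (x : T) : {set 'I_n} :=
  [set i | `[< A i x >]].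

Lemma mfib_code {n} (A : 'I_n -> set T) : (forall i, measurable (A i)) ->
  mfib (code A).
Proof.
move=> mA S.
have -> : [set x | code A x = S] =
  \big[setI/setT]_(i <- enum 'I_n) (if i \in S then A i else ~` A i).
  apply/seteqP; split => x /=.
  - move=> <-; rewrite -bigcap_seq /= => i _ /=.
    rewrite /code inE; case: (boolP `[< A i x >]) => /asboolP //.
  - rewrite -bigcap_seq /= => H; apply/setP => i; rewrite /code inE.
    have hi : [set` enum 'I_n] i by rewrite /= mem_enum.
    move: (H i hi); case: (i \in S) => /= h.
      by apply/asboolP.
    by apply/asboolPn.
apply: bigsetI_measurable => i _.
by case: (i \in S); [exact: mA | exact: measurableC (mA i)].
Qed.

Lemma mfib_sign (f : T -> R) : measurable_fun setT f ->
  mfib (fun x => `[< 0 <= f x >]).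
Proof.
move=> mf b.
have m0 : measurable [set x | 0 <= f x].
  have := mf measurableT `[0, +oo[%classic (measurable_itv _).
  rewrite setTI; congr measurable; apply/seteqP; split => x /=;
    by rewrite in_itv /= andbT.
case: b.
  congr measurable: m0; apply/seteqP; split => x /=.
    by move=> h; apply/asboolP.
  by move/asboolP.
have -> : [set x | `[< 0 <= f x >] = false] = ~` [set x | 0 <= f x].
  apply/seteqP; split => x /=.
    by move=> h /asboolP; rewrite h.
  by move=> h; apply/negbTE/asboolP.
exact: measurableC.
Qed.
End fib.

Section core.
Context {d : measure_display} {T : measurableType d} {R : realType}
  (mu : {measure set T -> \bar R}) (X : set (T -> R)) (N : (T -> R) -> R)
  (hX : strictly_rectangular_space mu X N).

Lemma X_ext {g h} : X g -> (forall x, g x = h x) -> X h.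
Proof. by move=> Xg e; have -> : h = g by apply/funext => x; rewrite e. Qed.

Lemma N_ext {g h} : (forall x, g x = h x) -> N g = N h.
Proof. by move=> e; have -> : h = g by apply/funext => x; rewrite e. Qed.

Lemma N_ge0 {g} : X g -> 0 <= N g.
Proof.
move=> Xg.
have h1 := srs_triangle hX Xg (srs_scale hX (-1) Xg).
rewrite (srs_homog hX (-1) Xg) normrN normr1 mul1r in h1.
have e : N (fun x => g x + -1 * g x) = N (fun x => 0 * g x).
  by apply: N_ext => x; rewrite mulN1r mul0r subrr.
rewrite e (srs_homog hX 0 Xg) normr0 mul0r in h1.
lra.
Qed.

Lemma core01 {K : finType} (G : T -> K) (h : T -> R) : mfib G -> X h ->
  forall (s : seq K) (F : K -> R), (forall k, 0 <= F k <= 1) ->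
  (forall k, k \notin s -> F k = 0 \/ F k = 1) ->
  X (fun x => F (G x) * h x) /\ N (fun x => F (G x) * h x) <= N h.
Proof.
move=> hG Xh s; elim: s => [|k0 s IH] F F01 Fs.
  pose A := [set x | F (G x) = 1].
  have mA : measurable A by exact: (mfib_pred _ hG (fun k => F k = 1)).
  have e : forall x, \1_A x * h x = F (G x) * h x.
    move=> x; rewrite indicE; case: (Fs (G x) (negbT (in_nil _))) => e.
      by rewrite memNset ?e // /A /= e => /esym/eqP; rewrite oner_eq0.
    by rewrite mem_set // /A /= e.
  have [Xa Na] := srs_rect hX mA Xh.
  by split; [exact: X_ext Xa e | rewrite -(N_ext e)].
pose F1 k := if k == k0 then 1 else F k.
pose F0 k := if k == k0 then 0 else F k.
have H1 : forall k, 0 <= F1 k <= 1.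
  by move=> k; rewrite /F1; case: (k == k0) => //; rewrite ler01 lexx.
have H0 : forall k, 0 <= F0 k <= 1.
  by move=> k; rewrite /F0; case: (k == k0) => //; rewrite ler01 lexx.
have S1 : forall k, k \notin s -> F1 k = 0 \/ F1 k = 1.
  move=> k ks; rewrite /F1; case: eqP => [_|/eqP kk0]; first by right.
  by apply: Fs; rewrite inE negb_or kk0.
have S0 : forall k, k \notin s -> F0 k = 0 \/ F0 k = 1.
  move=> k ks; rewrite /F0; case: eqP => [_|/eqP kk0]; first by left.
  by apply: Fs; rewrite inE negb_or kk0.
have [X1 N1] := IH F1 H1 S1.
have [X0 N0] := IH F0 H0 S0.
have e : forall x, F k0 * (F1 (G x) * h x) + (1 - F k0) * (F0 (G x) * h x)
   = F (G x) * h x.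
  move=> x; rewrite /F1 /F0; case: eqP => [->|_]; first by ring.
  by ring.
have Xa := srs_scale hX (F k0) X1.
have Xb := srs_scale hX (1 - F k0) X0.
split; first exact: X_ext (srs_add hX Xa Xb) e.
rewrite -(N_ext e).
apply: le_trans (srs_triangle hX Xa Xb) _.
rewrite (srs_homog hX _ X1) (srs_homog hX _ X0).
have /andP[a0 a1] := F01 k0.
rewrite ger0_norm // ger0_norm ?subr_ge0 //.
have g1 := N_ge0 X1; have g0 := N_ge0 X0.
have : F k0 * N (fun x => F1 (G x) * h x) <= F k0 * N h by apply: ler_wpM2l.
have : (1 - F k0) * N (fun x => F0 (G x) * h x) <= (1 - F k0) * N h.
  by apply: ler_wpM2l; rewrite ?subr_ge0.
lra.
Qed.


Lemma coreM {K : finType} (G : T -> K) (h : T -> R) (M : R) : mfib G -> X h ->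
  0 <= M -> forall (F : K -> R), (forall k, 0 <= F k <= M) ->
  X (fun x => F (G x) * h x) /\ N (fun x => F (G x) * h x) <= M * N h.
Proof.
move=> hG Xh M0 F FM.
pose F' k := F k / M.
have H' : forall k, 0 <= F' k <= 1.
  move=> k; have /andP[a b] := FM k; rewrite /F'.
  have [->|Mn0] := eqVneq M 0; first by rewrite invr0 mulr0 lexx ler01.
  have Mp : 0 < M by rewrite lt_def Mn0 M0.
  by rewrite divr_ge0 // ler_pdivrMr // mul1r.
have [X' N'] := core01 G h hG Xh (enum K) F' H' (fun k (hk : k \notin enum K) => ltac:(by rewrite mem_enum in hk)).
have e : forall x, M * (F' (G x) * h x) = F (G x) * h x.
  move=> x; rewrite /F'.
  have [M0'|Mn0] := eqVneq M 0.
    have /andP[a b] := FM (G x); rewrite M0' in b.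
    have -> : F (G x) = 0 by apply/le_anti; rewrite a b.
    by rewrite M0' !mul0r.
  by rewrite mulrA mulrCA divff // mulr1.
split; first exact: X_ext (srs_scale hX M X') e.
rewrite -(N_ext e) (srs_homog hX _ X') ger0_norm //.
exact: ler_wpM2l.
Qed.

Lemma coreS {K : finType} (G : T -> K) (h : T -> R) (M : R) : mfib G -> X h ->
  0 <= M -> forall (F : K -> R), (forall k, `|F k| <= M) ->
  X (fun x => F (G x) * h x) /\ N (fun x => F (G x) * h x) <= (M + M) * N h.
Proof.
move=> hG Xh M0 F FM.
pose Fp k := if 0 <= F k then F k else 0.
pose Fn k := if 0 <= F k then 0 else - F k.
have Hp : forall k, 0 <= Fp k <= M.
  move=> k; have := FM k; rewrite ler_norml /Fp => /andP[a b].
  by case: ifP => h0; rewrite ?h0 ?b ?lexx.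
have Hn : forall k, 0 <= Fn k <= M.
  move=> k; have := FM k; rewrite ler_norml /Fn => /andP[a b].
  case: ifP => h0; rewrite ?lexx ?M0 //.
  by rewrite oppr_ge0 ltW ?ltNge ?h0 // lerNl.
have [Xp Np] := coreM G h M hG Xh M0 Fp Hp.
have [Xn Nn] := coreM G h M hG Xh M0 Fn Hn.
have e : forall x, Fp (G x) * h x + (-1) * (Fn (G x) * h x) = F (G x) * h x.
  by move=> x; rewrite /Fp /Fn; case: ifP => _; ring.
have Xb := srs_scale hX (-1) Xn.
split; first exact: X_ext (srs_add hX Xp Xb) e.
rewrite -(N_ext e).
apply: le_trans (srs_triangle hX Xp Xb) _.
rewrite (srs_homog hX _ Xn) normrN normr1 mul1r.
lra.
Qed.


Lemma X_fin {K : finType} (G : T -> K) (h : T -> R) (F : K -> R) : mfib G -> X h ->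
  X (fun x => F (G x) * h x).
Proof.
move=> hG Xh.
have M0 : 0 <= \sum_(k : K) `|F k| by apply: sumr_ge0 => k _; exact: normr_ge0.
have FM : forall k, `|F k| <= \sum_(k : K) `|F k|.
  move=> k; rewrite (bigD1 k) //= lerDl.
  by apply: sumr_ge0 => j _; exact: normr_ge0.
by have [] := coreS G h _ hG Xh M0 F FM.
Qed.

End core.

Lemma Linf_facts {d : measure_display} {T : measurableType d} {R : realType}
  (mu : {measure set T -> \bar R}) (s : T -> R) (B : R) :
  (forall x, `|s x| <= B) ->
  0 <= Linf_norm mu s /\ {ae mu, forall x, `|s x| <= Linf_norm mu s}.
Proof.
move=> sB.
have Eub : (ess_sup mu (fun x => (`|s x|)%:E) <= B%:E)%E.
  by apply: (@ess_sup_ler _ _ _ mu (fun x => `|s x|)) => t; rewrite lee_fin.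
have Ege := ess_sup_ge mu (fun x => (`|s x|)%:E).
have Eny := ess_sup_eqNyP mu (fun x => (`|s x|)%:E).
rewrite /Linf_norm.
move: Eub Ege Eny; case: (ess_sup mu _) => [r| |] Eub Ege Eny /=.
- have ae1 : {ae mu, forall x, `|s x| <= r}.
    by apply: filterS Ege => x /=; rewrite lee_fin.
  split => //.
  rewrite leNgt; apply/negP => r0.
  have : (r%:E = -oo)%E.
    apply/Eny; apply: filterS ae1 => x /= h; exfalso.
    have := normr_ge0 (s x); lra.
  by [].
- by [].
- split => //.
  have := (proj1 Eny) erefl.
  by apply: filterS => x.
Qed.

Section rep.
Context {d : measure_display} {T : measurableType d} {R : realType}
  (mu : {measure set T -> \bar R}) (X : set (T -> R)) (N : (T -> R) -> R)
  (hX : strictly_rectangular_space mu X N).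

Lemma Xsum n (F : 'I_n -> T -> R) : (forall i, X (F i)) ->
  X (fun x => \sum_(i < n) F i x).
Proof.
elim: n F => [|n IH] F XF.
  by apply: X_ext (srs_0 hX) _ => x; rewrite big_ord0.
apply: X_ext (srs_add hX (IH (fun i => F (widen_ord (leqnSn n) i)) _) (XF ord_max)) _.
  by move=> i; exact: XF.
by move=> x; rewrite big_ord_recr.
Qed.

Lemma sum_code n (c : 'I_n -> R) (A : 'I_n -> set T) x :
  \sum_(i < n) c i * \1_(A i) x = \sum_(i in code A x) c i.
Proof.
rewrite [RHS]big_mkcond /=; apply: eq_bigr => i _.
rewrite /code inE indicE.
case: (boolP `[< A i x >]) => /asboolP h.
  by rewrite mem_set // mulr1.
by rewrite memNset // mulr0.
Qed.

Lemma S_rep f g : S_fX mu X f g -> X g /\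
  exists n (A : 'I_n -> set T) (P : {set 'I_n} -> R),
    (forall i, measurable (A i)) /\
    {ae mu, forall x, g x = f x * P (code A x)}.
Proof.
case=> Lg [n [c [A [hA hae]]]].
have XS : X (fun x => \sum_(i < n) c i * (f x * \1_(A i) x)).
  by apply: Xsum => i; apply: srs_scale hX _ _ (hA i).2.
have Xg : X g.
  have [] := srs_ae hX XS Lg _ => //.
  rewrite /ae_eq; apply: filterS hae => x /= ->. by [].
split=> //; exists n, A, (fun S : {set 'I_n} => \sum_(i in S) c i); split.
  by move=> i; exact: (hA i).1.
apply: filterS hae => x /= ->.
rewrite -sum_code mulr_sumr; apply: eq_bigr => i _; ring.
Qed.
End rep.

Lemma ae2 {d : measure_display} {T : measurableType d} {R : realType}
  {mu : {measure set T -> \bar R}} {P Q : T -> Prop} :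
  {ae mu, forall x, P x} -> {ae mu, forall x, Q x} -> {ae mu, forall x, P x /\ Q x}.
Proof.
move=> hP hQ.
exact: (filterS2 (ae_filter_ringOfSetsType mu) (fun x a b => conj a b) hP hQ).
Qed.

Lemma enumF {R : realType} {K : finType} (F : K -> R) k :
  k \notin enum K -> F k = 0 \/ F k = 1.
Proof. by rewrite mem_enum. Qed.

Theorem proposition3p4 (d : measure_display) (T : measurableType d)
  (R : realType) (mu : {measure set T -> \bar R})
  (X : set (T -> R)) (N : (T -> R) -> R) :
  (mu setT < +oo)%E ->
  strictly_rectangular_space mu X N ->
  forall f : T -> R, L0 f ->
    (forall g h, S_fX mu X f g -> S_fX mu X f h ->
       ae_le mu (fun _ => 0) g -> ae_le mu g h -> N g <= N h) /\
    (forall g h, S_fX mu X f g -> S_fX mu X f h ->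
       N (fun x => `|g x| - `|h x|) <= 4 * N (fun x => g x - h x)) /\
    (X f ->
     forall s g, simple_fun s -> S_fX mu X f g ->
       N (fun x => `|s x * g x|) <= Linf_norm mu s * N (fun x => `|g x|) /\
       N (fun x => s x * g x) <= 4 * Linf_norm mu s * N g).
Proof.
move=> muT hX f Lf.
split.
  move=> g h Sg Sh g0 gh.
  have [Xg [nA [A [P [mA aeg]]]]] := S_rep _ _ _ hX _ _ Sg.
  have [Xh [nB [B [Q [mB aeh]]]]] := S_rep _ _ _ hX _ _ Sh.
  pose G x := (code A x, code B x).
  have hG : mfib G := mfib_pair _ _ (mfib_code _ mA) (mfib_code _ mB).
  pose F (k : {set 'I_nA} * {set 'I_nB}) :=
    if 0 <= P k.1 / Q k.2 <= 1 then P k.1 / Q k.2 else 0.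
  have F01 : forall k, 0 <= F k <= 1.
    by move=> k; rewrite /F; case: ifP => // _; rewrite lexx ler01.
  have [Xr Nr] := core01 _ _ _ hX G h hG Xh (enum _) F F01 (enumF F).
  suff ae1 : Defs.ae_eq mu (fun x => F (G x) * h x) g.
    by have [_ e] := srs_ae hX Xr (srs_L0 hX Xg) ae1; rewrite e.
  have H4 := ae2 (ae2 aeg aeh) (ae2 g0 gh).
  apply: filterS H4 => x [[eg eh] [a0 ab]].
  rewrite /F /G /=; move: a0 ab; rewrite eg eh.
  set a := f x; set p := P _; set q := Q _ => a0 ab.
  have [q0|qn0] := eqVneq q 0.
    rewrite q0 mulr0 in ab; rewrite q0 !mulr0.
    apply/esym; apply: le_anti; by rewrite ab a0.
  have [a0'|an0] := eqVneq a 0.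
    by rewrite a0' !mul0r mulr0.
  have aqp : 0 < a * q.
    by rewrite lt_def mulf_neq0 //= (le_trans a0 ab).
  have -> : p / q = (a * p) / (a * q) by field; rewrite qn0 an0.
  rewrite divr_ge0 ?(ltW aqp) //= ler_pdivrMr // mul1r ab /=.
  by field; rewrite qn0 an0.
split.
  move=> g h Sg Sh.
  have Lg := Sg.1; have Lh := Sh.1.
  have [Xg [nA [A [P [mA aeg]]]]] := S_rep _ _ _ hX _ _ Sg.
  have [Xh [nB [B [Q [mB aeh]]]]] := S_rep _ _ _ hX _ _ Sh.
  pose G x := ((code A x, code B x), `[< 0 <= f x >]).
  have hG : mfib G := mfib_pair _ _ (mfib_pair _ _ (mfib_code _ mA) (mfib_code _ mB))
    (mfib_sign _ Lf).
  pose q2 (p q : R) := if p == q then 0 else (`|p| - `|q|) / (p - q).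
  pose F (k : ({set 'I_nA} * {set 'I_nB}) * bool) :=
    (if k.2 then 1 else -1) * q2 (P k.1.1) (Q k.1.2).
  have F1 : forall k, `|F k| <= 1.
    move=> k; rewrite /F normrM.
    have -> : `|(if k.2 then 1 else -1 : R)| = 1.
      by case: k.2; rewrite ?normrN normr1.
    rewrite mul1r /q2; case: eqP => [_|/eqP pq]; first by rewrite normr0 ler01.
    rewrite normrM normfV ler_pdivrMr ?normr_gt0 ?subr_eq0 // mul1r.
    exact: ler_dist_dist.
  have Xu : X (fun x => g x - h x).
    apply: X_ext (srs_add hX Xg (srs_scale hX (-1) Xh)) _ => x; ring.
  have [Xr Nr] := coreS _ _ _ hX G _ 1 hG Xu ler01 F F1.
  have Lb : L0 (fun x => `|g x| - `|h x|).
    apply: measurable_realfun.measurable_funB; apply: measurableT_comp => //;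
      exact: measurable_realfun.normr_measurable.
  suff ae1 : Defs.ae_eq mu (fun x => F (G x) * (g x - h x))
                           (fun x => `|g x| - `|h x|).
    have [_ e] := srs_ae hX Xr Lb ae1; rewrite e.
    have := N_ge0 _ _ _ hX Xu; lra.
  apply: filterS (ae2 aeg aeh) => x [eg eh].
  rewrite /F /G /= eg eh.
  set a := f x; set p := P _; set q := Q _.
  rewrite !normrM.
  have [pq|pq] := eqVneq p q.
    by rewrite /q2 pq eqxx mulr0 mul0r subrr.
  rewrite /q2 (negbTE pq).
  have pq' : p - q != 0 by rewrite subr_eq0.
  case: (boolP `[< 0 <= a >]) => /asboolP ha.
    rewrite (ger0_norm ha); field; exact: pq'.
  have an : a < 0 by rewrite ltNge; apply/negP.
  rewrite (ltr0_norm an).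
  field; exact: pq'.
move=> Xf s g [n [c [D [mD es]]]] Sg.
have Lg := Sg.1.
pose Sv (S : {set 'I_n}) := \sum_(i in S) c i.
have sE : forall x, s x = Sv (code D x) by move=> x; rewrite es sum_code.
have hD := mfib_code _ mD.
have Ls : measurable_fun setT s.
  have -> : s = (fun x => Sv (code D x)) by apply/funext => x; exact: sE.
  exact: mfib_mfun.
have sB : forall x, `|s x| <= \sum_(k : {set 'I_n}) `|Sv k|.
  move=> x; rewrite sE (bigD1 (code D x)) //= lerDl.
  by apply: sumr_ge0 => j _; exact: normr_ge0.
have [M0 aeM] := Linf_facts mu s _ sB.
set M := Linf_norm mu s in M0 aeM *.
have [Xg [nA [A [P [mA aeg]]]]] := S_rep _ _ _ hX _ _ Sg.
have Xag : X (fun x => `|g x|).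
  pose G1 x := (code A x, `[< 0 <= f x >]).
  have hG1 : mfib G1 := mfib_pair _ _ (mfib_code _ mA) (mfib_sign _ Lf).
  pose F1 (k : {set 'I_nA} * bool) := (if k.2 then 1 else -1) * `|P k.1|.
  have X1 := X_fin _ _ _ hX G1 f F1 hG1 Xf.
  have La : L0 (fun x => `|g x|).
    apply: measurableT_comp => //; exact: measurable_realfun.normr_measurable.
  suff ae1 : Defs.ae_eq mu (fun x => F1 (G1 x) * f x) (fun x => `|g x|).
    by have [] := srs_ae hX X1 La ae1.
  apply: filterS aeg => x ->; rewrite /F1 /G1 /= normrM.
  case: (boolP `[< 0 <= f x >]) => /asboolP ha.
    by rewrite (ger0_norm ha); ring.
  have an : f x < 0 by rewrite ltNge; apply/negP.
  by rewrite (ltr0_norm an); ring.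
split.
  pose F2 (k : {set 'I_n}) := if `|Sv k| <= M then `|Sv k| else 0.
  have H2 : forall k, 0 <= F2 k <= M.
    by move=> k; rewrite /F2; case: ifP => h; rewrite ?h ?normr_ge0 ?lexx.
  have [Xr Nr] := coreM _ _ _ hX (code D) (fun x => `|g x|) M hD Xag M0 F2 H2.
  have Lb : L0 (fun x => `|s x * g x|).
    have hm := measurable_realfun.measurable_funM Ls Lg.
    have := measurableT_comp (@measurable_realfun.normr_measurable R setT) hm.
    by [].
  suff ae1 : Defs.ae_eq mu (fun x => F2 (code D x) * `|g x|)
                           (fun x => `|s x * g x|).
    by have [_ e] := srs_ae hX Xr Lb ae1; rewrite e.
  apply: filterS aeM => x hx.
  by rewrite /F2 -sE hx normrM.
pose F3 (k : {set 'I_n}) := if `|Sv k| <= M then Sv k else 0.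
have H3 : forall k, `|F3 k| <= M.
  by move=> k; rewrite /F3; case: ifP => h; rewrite ?h ?normr0.
have [Xr Nr] := coreS _ _ _ hX (code D) g M hD Xg M0 F3 H3.
have Lb : L0 (fun x => s x * g x).
  exact: measurable_realfun.measurable_funM.
suff ae1 : Defs.ae_eq mu (fun x => F3 (code D x) * g x) (fun x => s x * g x).
  have [_ e] := srs_ae hX Xr Lb ae1; rewrite e.
  have Ng := N_ge0 _ _ _ hX Xg.
  have MN : 0 <= M * N g by apply: mulr_ge0.
  have -> : 4 * M * N g = 4 * (M * N g) by ring.
  have e2 : (M + M) * N g = 2 * (M * N g) by ring.
  rewrite e2 in Nr; lra.
apply: filterS aeM => x hx.
by rewrite /F3 -sE hx.
Qed.
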